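(* Let $D\in\mathbb{R}^{n\times n}$, $\lambda,\mu>0$, positive integers $k_0\le n$ and $k_1\le n^2$, and let $\mathcal I_0\subset[n]\times[n]$ with $|\mathcal I_0|=n^2-k_1$. Let $S^\star\in\{0,1\}^{n\times n}$ be given by $S^\star_{ij}=0\iff(i,j)\in\mathcal I_0$. Define $$g(X)=\Big\|D-X-S^\star\circ\tfrac{D-X}{1+\mu}\Big\|_F^2+\lambda\|X\|_F^2+\mu\Big\|S^\star\circ\tfrac{D-X}{1+\mu}\Big\|_F^2 .$$ Consider the alternating minimization with fixed sparsity pattern: $X_0=0$ and for $t\ge0$, $Y_{t+1}=S^\star\circ\frac{D-X_t}{1+\mu}$ (the minimizer of $f(X_t,\cdot)$ over $Y$ with $Y_{ij}=0$ for $(i,j)\in\mathcal I_0$) and $X_{t+1}\in\arg\min_{\mathrm{Rank}(X)\le k_0}f(X,Y_{t+1})$, where $f(X,Y)=\|D-X-Y\|_F^2+\lambda\|X\|_F^2+\mu\|Y\|_F^2$. Then this procedure is equivalent to projected gradient descent $X_{t+1}=\mathcal P_\Omega\big(X_t-\eta\nabla g(X_t)\big)$ on $g$ over $\Omega$ started at $X_0=0$ with step size $\eta=\frac{1}{2(1+\lambda)}$: the two methods produce the same sequence of low-rank iterates $X_t$ (with the same choice of projection in case of non-uniqueness), and $f(X_t,Y_t)=g(X_t)$ for all iterations $t\ge1$.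
   Context: $\circ$ is the Hadamard product, $\|\cdot\|_F$ the Frobenius norm, $\Omega=\{X\in\mathbb{R}^{n\times n}:\mathrm{Rank}(X)\le k_0\}$, and $\mathcal P_\Omega(A)\in\arg\min_{X\in\Omega}\|A-X\|_F^2$ is the (Euclidean) projection onto $\Omega$, given by a top-$k_0$ truncated singular value decomposition of $A$. *)

(* Defs.v *)
From HB Require Import structures.
From mathcomp Require Import all_boot all_order all_algebra.
From mathcomp Require Import all_classical all_reals all_analysis.
Set Implicit Arguments. Unset Strict Implicit. Unset Printing Implicit Defensive.
Import Order.TTheory GRing.Theory Num.Theory.
Local Open Scope ring_scope.

Definition frob2 {R : realType} {n : nat} (A : 'M[R]_n) : R :=
  \sum_(i < n) \sum_(j < n) A i j ^+ 2.

Definition hadamard {R : realType} {n : nat} (A B : 'M[R]_n) : 'M[R]_n :=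
  \matrix_(i, j) (A i j * B i j).

Definition low_rank {R : realType} {n : nat} (k0 : nat) (X : 'M[R]_n) : Prop :=
  (\rank X <= k0)%N.

Definition is_argmin {T : Type} {d} {R' : porderType d}
  (C : T -> Prop) (h : T -> R') (Z : T) : Prop :=
  C Z /\ forall W, C W -> (h Z <= h W)%O.

Definition grad {R : realType} {n : nat} (h : 'M[R]_n -> R) (X : 'M[R]_n)
  : 'M[R]_n := \matrix_(i, j) derive h X (delta_mx i j : 'M[R]_n).

Definition Sstar {R : realType} {n : nat} (I0 : {set 'I_n * 'I_n}) : 'M[R]_n :=
  \matrix_(i, j) (if (i, j) \in I0 then 0 else 1).

Definition fobj {R : realType} {n : nat} (D : 'M[R]_n) (lam mu : R)
  (X Y : 'M[R]_n) : R :=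
  frob2 (D - X - Y) + lam * frob2 X + mu * frob2 Y.

Definition Yopt {R : realType} {n : nat} (D : 'M[R]_n) (mu : R)
  (I0 : {set 'I_n * 'I_n}) (X : 'M[R]_n) : 'M[R]_n :=
  hadamard (Sstar I0) ((1 + mu)^-1 *: (D - X)).

Definition gobj {R : realType} {n : nat} (D : 'M[R]_n) (lam mu : R)
  (I0 : {set 'I_n * 'I_n}) (X : 'M[R]_n) : R :=
  frob2 (D - X - hadamard (Sstar I0) ((1 + mu)^-1 *: (D - X)))
  + lam * frob2 X
  + mu * frob2 (hadamard (Sstar I0) ((1 + mu)^-1 *: (D - X))).

(* Main.v *)
Require Import Defs.
From HB Require Import structures.
From mathcomp Require Import all_boot all_order all_algebra.
From mathcomp Require Import all_classical all_reals all_analysis.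
From mathcomp Require Import ring lra.
Import Order.TTheory GRing.Theory Num.Theory.
Import numFieldNormedType.Exports.
Local Open Scope ring_scope.
Local Open Scope classical_set_scope.

Lemma lim_lin (R : realType) (a b : R) (q : R -> R) :
  (forall h, h != 0 -> q h = a + b * h) -> lim (q @ (0:R)^') = a.
Proof.
move=> H; apply: cvg_lim => //.
apply: (@cvg_trans _ ((fun h => a + b * h) @ (0:R)^')).
  apply: near_eq_cvg; near=> h; rewrite H //.
  near: h; exact: nbhs_dnbhs_neq.
apply: cvg_within_filter.
have H2 : (fun h : R => a + b * h) @ (0:R) --> a + b * 0.
  apply: cvgD; first exact: cvg_cst.
  apply: cvgMl_tmp; exact: cvg_id.
by rewrite mulr0 addr0 in H2.
Unshelve. all: by end_near.
Qed.

Section Sums.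
Variables (R : realType) (n : nat).
Lemma s2M (c : R) (F : 'I_n -> 'I_n -> R) :
  c * (\sum_(i < n) \sum_(j < n) F i j) = \sum_(i < n) \sum_(j < n) (c * F i j).
Proof. rewrite mulr_sumr; apply: eq_bigr => i _; by rewrite mulr_sumr. Qed.
Lemma s2D (F G : 'I_n -> 'I_n -> R) :
  (\sum_(i < n) \sum_(j < n) F i j) + (\sum_(i < n) \sum_(j < n) G i j)
   = \sum_(i < n) \sum_(j < n) (F i j + G i j).
Proof. rewrite -big_split; apply: eq_bigr => i _; by rewrite -big_split. Qed.
Lemma s2B (F G : 'I_n -> 'I_n -> R) :
  (\sum_(i < n) \sum_(j < n) F i j) - (\sum_(i < n) \sum_(j < n) G i j)
   = \sum_(i < n) \sum_(j < n) (F i j - G i j).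
Proof. rewrite -sumrB; apply: eq_bigr => i _; by rewrite -sumrB. Qed.
End Sums.

Section S.
Variables (R : realType) (n : nat) (D : 'M[R]_n) (lam mu : R) (I0 : {set 'I_n * 'I_n}).

Definition phi (d s x : R) :=
  (d - x - s * ((1 + mu)^-1 * (d - x)))^+2 + lam * x^+2
  + mu * (s * ((1 + mu)^-1 * (d - x)))^+2.

Lemma gobjE X : gobj D lam mu I0 X =
  \sum_(k < n) \sum_(l < n) phi (D k l) (Sstar I0 k l) (X k l).
Proof.
rewrite /gobj /frob2 !mulr_sumr -!big_split /=; apply: eq_bigr => k _.
rewrite !mulr_sumr -!big_split /=; apply: eq_bigr => l _.
by rewrite /hadamard !mxE.
Qed.

Lemma gobj_shift X i j h : gobj D lam mu I0 (h *: delta_mx i j + X) - gobj D lam mu I0 X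
  = phi (D i j) (Sstar I0 i j) (X i j + h) - phi (D i j) (Sstar I0 i j) (X i j).
Proof.
rewrite !gobjE -sumrB (bigD1 i) //= [X in _ + X = _]big1 ?addr0; last first.
  move=> k /negbTE ki; rewrite -sumrB big1 // => l _.
  by rewrite !mxE ki /= mulr0 add0r subrr.
rewrite -sumrB (bigD1 j) //= [X in _ + X = _]big1 ?addr0; last first.
  move=> l /negbTE lj; by rewrite !mxE lj eqxx /= mulr0 add0r subrr.
by rewrite !mxE !eqxx /= mulr1 addrC.
Qed.

Definition dphi (d s x : R) :=
  - 2 * (d - x) * (1 - s * (1 + mu)^-1)^+2 + 2 * lam * x
  - 2 * mu * (s * (1 + mu)^-1)^+2 * (d - x).
Definition qphi (s : R) :=
  (1 - s * (1 + mu)^-1)^+2 + lam + mu * (s * (1 + mu)^-1)^+2.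

Lemma derive_gobj X i j :
  derive (gobj D lam mu I0) X (delta_mx i j) = dphi (D i j) (Sstar I0 i j) (X i j).
Proof.
rewrite /derive; apply: (@lim_lin R _ (qphi (Sstar I0 i j))) => h h0 /=.
rewrite gobj_shift.
rewrite /phi /dphi /qphi.
have -> : forall z : R, h^-1 *: z = h^-1 * z by [].
set a := (1 + mu)^-1; set d := D i j; set x := X i j; set s := Sstar I0 i j.
by field.
Qed.

Lemma step X : 0 < lam -> 0 < mu ->
  X - (2 * (1 + lam))^-1 *: grad (gobj D lam mu I0) X
  = (1 + lam)^-1 *: (D - Yopt D mu I0 X).
Proof.
move=> hl hm; apply/matrixP => i j.
rewrite /grad /Yopt /hadamard !mxE derive_gobj /dphi /Sstar !mxE.
have h1 : 1 + mu != 0 by rewrite gt_eqF // ltr_wpDr // ltW.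
have h2 : 1 + lam != 0 by rewrite gt_eqF // ltr_wpDr // ltW.
set d := D i j; set x := X i j.
case: ifP => _.
  by field; rewrite ?h1 ?h2.
by field; rewrite ?h1 ?h2.
Qed.

Lemma fobjE Z Y : 0 < lam -> fobj D lam mu Z Y =
  (1 + lam) * frob2 ((1 + lam)^-1 *: (D - Y) - Z)
  + (frob2 (D - Y) - (1 + lam) * frob2 ((1 + lam)^-1 *: (D - Y)) + mu * frob2 Y).
Proof.
move=> hl; have h2 : 1 + lam != 0 by rewrite gt_eqF // ltr_wpDr // ltW.
rewrite /fobj /frob2 !s2M !s2D !s2B !s2D.
apply: eq_bigr => i _; apply: eq_bigr => j _; rewrite !mxE.
by field.
Qed.

Lemma argmin_aff (T : Type) (C : T -> Prop) (h1 h2 : T -> R) (c K : R) Z :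
  0 < c -> (forall W, h1 W = c * h2 W + K) ->
  is_argmin C h1 Z <-> is_argmin C h2 Z.
Proof.
move=> c0 E; rewrite /is_argmin; split=> -[CZ H]; split=> // W CW; have := H W CW;
  rewrite !E.
  by rewrite lerD2r ler_pM2l.
by move=> le; rewrite lerD2r ler_pM2l.
Qed.
End S.

Theorem proposition9 (R : realType) (n : nat) (D : 'M[R]_n) (lam mu : R)
  (k0 k1 : nat) (I0 : {set 'I_n * 'I_n}) :
  0 < lam -> 0 < mu ->
  (0 < k0)%N -> (k0 <= n)%N -> (0 < k1)%N -> (k1 <= n ^ 2)%N ->
  #|I0| = (n ^ 2 - k1)%N ->
  forall (X Y : nat -> 'M[R]_n),
    X 0%N = 0 ->
    (forall t, Y t.+1 = Yopt D mu I0 (X t)) ->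
    ((forall t, is_argmin (low_rank k0) (fun Z => fobj D lam mu Z (Y t.+1))
                          (X t.+1))
     <->
     (forall t, is_argmin (low_rank k0)
                  (fun Z => frob2 (X t - (2 * (1 + lam))^-1
                                      *: grad (gobj D lam mu I0) (X t) - Z))
                  (X t.+1)))
    /\
    ((forall t, is_argmin (low_rank k0) (fun Z => fobj D lam mu Z (Y t.+1))
                          (X t.+1)) ->
     forall t, fobj D lam mu (X t) (Y t.+1) = gobj D lam mu I0 (X t)).
Proof.
move=> hl hm _ _ _ _ _ X Y _ HY.
have c0 : 0 < 1 + lam by rewrite ltr_wpDr // ltW.
have key : forall t, is_argmin (low_rank k0) (fun Z => fobj D lam mu Z (Y t.+1)) (X t.+1)
  <-> is_argmin (low_rank k0)
                  (fun Z => frob2 (X t - (2 * (1 + lam))^-1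
                                      *: grad (gobj D lam mu I0) (X t) - Z))
                  (X t.+1).
  move=> t; rewrite step // HY.
  apply: (@argmin_aff R _ _ _ _ (1 + lam)) => // W; exact: fobjE.
split; first by split=> H t; apply/key.
by move=> _ t; rewrite HY.
Qed.
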